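(* Let $K\subset\mathbb{R}^n$ be a nonempty compact set and $H$ a linear subspace of $\mathbb{R}^n$ with $1\le\dim H\le n-1$. Then the sequence $K_m:=F_H^mK$ ($F_H$ applied $m$ times) converges in the Hausdorff metric to the $H$-symmetric compact set \[L=\bigcup_{x\in H}\mathrm{conv}\big(F_HK\cap(x+H^\perp)\big).\]
   Context: For a linear subspace $H$, $H^\perp$ is its orthogonal complement, $x|H$ the orthogonal projection, and $R_Hx=2(x|H)-x$ the reflection with respect to $H$. Minkowski sum: $X+Y=\{x+y:x\in X,y\in Y\}$, $tX=\{tx\}$. The fiber symmetrization of a compact set $C$ is \[F_HC:=\bigcup_{x\in H}\Big[\tfrac12\big(C\cap(H^\perp+x)\big)+\tfrac12\big(R_HC\cap(H^\perp+x)\big)\Big].\] $\mathrm{conv}$ denotes convex hull. *)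

(* Defs.v *)
From HB Require Import structures.
From mathcomp Require Import all_boot all_order all_algebra.
From mathcomp Require Import all_classical all_reals all_analysis.
Set Implicit Arguments. Unset Strict Implicit. Unset Printing Implicit Defensive.
Import Order.TTheory GRing.Theory Num.Theory.
Import numFieldNormedType.Exports.
Local Open Scope classical_set_scope.
Local Open Scope ring_scope.

Section Defs.
Variables (R : realType) (n : nat).
Notation V := 'rV[R]_n.

Definition dotv (u v : V) : R := \sum_(i < n) u 0 i * v 0 i.
Definition enorm (u : V) : R := Num.sqrt (dotv u u).

(* A linear subspace H is given as the row space of a square matrix H. *)
Definition subsp (H : 'M[R]_n) : set V := [set x | (x <= H)%MS].

Definition orthc (H : 'M[R]_n) : set V :=
  [set y | forall h : V, (h <= H)%MS -> dotv y h = 0].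

Definition oproj (H : 'M[R]_n) (x : V) : V :=
  xget 0 [set p : V | (p <= H)%MS /\ orthc H (x - p)].

Definition refl (H : 'M[R]_n) (x : V) : V := 2%:R *: oproj H x - x.

Definition msum (X Y : set V) : set V := [set z | exists x y, X x /\ Y y /\ z = x + y].
Definition sdil (t : R) (X : set V) : set V := [set z | exists x, X x /\ z = t *: x].
Definition strans (X : set V) (x : V) : set V := [set z | exists y, X y /\ z = y + x].

Definition fibsym (H : 'M[R]_n) (C : set V) : set V :=
  \bigcup_(x in subsp H)
     msum (sdil (1/2) (C `&` strans (orthc H) x))
          (sdil (1/2) ((refl H @` C) `&` strans (orthc H) x)).

Definition convexs (C : set V) : Prop :=
  forall x y (t : R), C x -> C y -> 0 <= t -> t <= 1 -> C (t *: x + (1 - t) *: y).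
Definition convhull (A : set V) : set V :=
  [set x | forall C, convexs C -> A `<=` C -> C x].

Definition enbhd (A : set V) (e : R) : set V :=
  [set y | exists a, A a /\ enorm (y - a) <= e].
Definition hdist (A B : set V) : R :=
  inf [set e : R | 0 <= e /\ A `<=` enbhd B e /\ B `<=` enbhd A e].

End Defs.

(* Main.v *)
Require Import Defs.
From HB Require Import structures.
From mathcomp Require Import all_boot all_order all_algebra.
From mathcomp Require Import all_classical all_reals all_analysis.
From mathcomp Require Import ring lra zify.
Set Implicit Arguments. Unset Strict Implicit. Unset Printing Implicit Defensive.
Import Order.TTheory GRing.Theory Num.Theory.
Import numFieldNormedType.Exports.
Local Open Scope classical_set_scope.
Local Open Scope ring_scope.
Section Lin.
Variables (R : realType) (n : nat) (H : 'M[R]_n).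
Notation V := 'rV[R]_n.

Lemma dotvE (u v : V) : dotv u v = (u *m v^T) 0 0.
Proof. by rewrite /dotv mxE; apply: eq_bigr => i _; rewrite mxE. Qed.

Lemma self_mul_eq0 k (u : 'rV[R]_k) : (u *m u^T) 0 0 = 0 -> u = 0.
Proof.
rewrite mxE => H0; apply/rowP => i; rewrite mxE.
have : u 0 i * u^T i 0 = 0.
  by apply: (psumr_eq0P _ H0) => // j _; rewrite mxE -expr2 sqr_ge0.
by rewrite mxE => /eqP; rewrite mulf_eq0 orbb => /eqP.
Qed.

Definition Bh := row_base H.
Definition Gh := Bh *m Bh^T.
Lemma Gh_unit : Gh \in unitmx.
Proof.
rewrite -row_free_unit; apply: inj_row_free => v Hv.
have vB : v *m Bh = 0.
  apply: self_mul_eq0.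
  by rewrite trmx_mul -mulmxA (mulmxA Bh) -/Gh mulmxA Hv mul0mx mxE.
by apply: (row_free_inj (row_base_free H)); rewrite vB mul0mx.
Qed.

Definition Mh := Bh^T *m invmx Gh *m Bh.
Definition P (v : V) : V := v *m Mh.

Lemma P_sub v : (P v <= H)%MS.
Proof.
have sB : (Bh <= H)%MS by rewrite /Bh (eq_row_base H).
rewrite /P /Mh mulmxA; exact: (submx_trans (submxMl _ Bh) sB). Qed.

Lemma subH_orth (y : V) : y *m Bh^T = 0 -> orthc H y.
Proof.
move=> Hy h hH; have : (h <= Bh)%MS by rewrite /Bh (eq_row_base H).
move=> /submxP [w ->].
by rewrite dotvE trmx_mul mulmxA Hy mul0mx mxE.
Qed.

Lemma P_orth v : orthc H (v - P v).
Proof.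
apply: subH_orth; rewrite mulmxBl /P /Mh.
have -> : v *m (Bh^T *m invmx Gh *m Bh) *m Bh^T = v *m Bh^T *m (invmx Gh *m Gh).
  by rewrite /Gh !mulmxA.
by rewrite mulVmx ?Gh_unit // mulmx1 subrr.
Qed.

Lemma dotvBl (a b c : V) : dotv (a - b) c = dotv a c - dotv b c.
Proof. by rewrite !dotvE mulmxBl !mxE. Qed.

Lemma proj_uniq (v p1 p2 : V) : (p1 <= H)%MS -> orthc H (v - p1) ->
  (p2 <= H)%MS -> orthc H (v - p2) -> p1 = p2.
Proof.
move=> s1 o1 s2 o2; apply/eqP; rewrite -subr_eq0; apply/eqP.
have sd : (p1 - p2 <= H)%MS by rewrite addmx_sub // eqmx_opp.
apply: self_mul_eq0; rewrite -dotvE.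
have {1}-> : p1 - p2 = (v - p2) - (v - p1) by rewrite opprB [RHS]addrC addrA subrK.
by rewrite dotvBl o1 // o2 // subrr.
Qed.

Lemma oprojE v : oproj H v = P v.
Proof.
rewrite /oproj; case: xgetP => [x -> [sx ox]|/(_ (P v)) []].
  exact: proj_uniq sx ox (P_sub v) (P_orth v).
by split; [exact: P_sub|exact: P_orth].
Qed.

Lemma P_id h : (h <= H)%MS -> P h = h.
Proof. by move=> hH; apply: (proj_uniq (P_sub h) (P_orth h) hH) => y _; rewrite subrr dotvE mul0mx mxE. Qed.

Lemma PD u v : P (u + v) = P u + P v. Proof. by rewrite /P mulmxDl. Qed.
Lemma PB u v : P (u - v) = P u - P v. Proof. by rewrite /P mulmxBl. Qed.
Lemma PN u : P (- u) = - P u. Proof. by rewrite /P mulNmx. Qed.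
Lemma PZ (t : R) u : P (t *: u) = t *: P u. Proof. by rewrite /P scalemxAl. Qed.
Lemma P0 : P 0 = 0. Proof. by rewrite /P mul0mx. Qed.
Lemma PP u : P (P u) = P u. Proof. exact: P_id (P_sub u). Qed.

Lemma orthcP y : orthc H y <-> P y = 0.
Proof.
split=> [oy|Py0].
  apply/esym/(proj_uniq (sub0mx _ _) _ (P_sub y) (P_orth y)); by rewrite subr0.
by have := P_orth y; rewrite Py0 subr0.
Qed.

Lemma reflE v : refl H v = 2%:R *: P v - v.
Proof. by rewrite /refl oprojE. Qed.

Lemma P_refl v : P (refl H v) = P v.
Proof. rewrite reflE PB PZ PP; apply/rowP => i; rewrite !mxE; ring. Qed.

Lemma refl_refl v : refl H (refl H v) = v.
Proof. rewrite reflE P_refl reflE; move: (P v) => p; apply/rowP => i; rewrite !mxE; ring. Qed.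

Lemma reflD u v : refl H (u + v) = refl H u + refl H v.
Proof. rewrite !reflE PD; move: (P u) (P v) => p q; apply/rowP => i; rewrite !mxE; ring. Qed.

Lemma reflZ (t : R) u : refl H (t *: u) = t *: refl H u.
Proof. rewrite !reflE PZ; move: (P u) => p; apply/rowP => i; rewrite !mxE; ring. Qed.

Lemma stransP x z : (x <= H)%MS -> (strans (orthc H) x z <-> P z = x).
Proof.
move=> xH; split=> [[y [/orthcP Py ->]]|Pz].
  by rewrite PD Py add0r P_id.
exists (z - x); split; last by rewrite subrK.
by apply/orthcP; rewrite PB Pz P_id // subrr.
Qed.

End Lin.
Section Conv.
Variables (R : realType) (n : nat).
Notation V := 'rV[R]_n.

Definition isCC (A : set V) N (l : nat -> R) (q : nat -> V) :=
  [/\ (forall i, (i < N)%N -> A (q i)), (forall i, (i < N)%N -> 0 <= l i) &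
      \sum_(i < N) l i = 1].

Lemma sum_split (T : zmodType) (F : nat -> T) N1 N2 :
  \sum_(i < N1 + N2) F i = \sum_(i < N1) F i + \sum_(i < N2) F (N1 + i)%N.
Proof. by rewrite big_split_ord. Qed.

Lemma sum_recl (T : zmodType) (F : nat -> T) N :
  \sum_(i < N.+1) F i = F 0%N + \sum_(i < N) F i.+1.
Proof. by rewrite big_ord_recl. Qed.

Lemma sum_remove (T : zmodType) (F : nat -> T) N i0 : (i0 < N.+1)%N ->
  \sum_(i < N.+1) F i = F i0 + \sum_(i < N) F (bump i0 i).
Proof. by move=> h; rewrite (bigD1_ord (Ordinal h)). Qed.

Lemma CC_convhull A N l q : isCC A N l q -> convhull A (\sum_(i < N) l i *: q i).
Proof.
move=> + C Cc AC; elim: N l q => [|N IH] l q [Aq l0 l1].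
  by move: l1; rewrite big_ord0 => /eqP; rewrite eq_sym oner_eq0.
rewrite (sum_recl (fun i => l i *: q i)); move: l1; rewrite (sum_recl l) => l1.
set r := \sum_(i < N) l i.+1.
have l0' j : (j < N)%N -> 0 <= l j.+1 by move=> h; apply: l0; rewrite ltnS.
have Aq' j : (j < N)%N -> A (q j.+1) by move=> h; apply: Aq; rewrite ltnS.
have r0 : 0 <= r by apply: sumr_ge0 => i _; exact: (l0' _ (ltn_ord i)).
have [rz|rp] := eqVneq r 0.
  have z j : (j < N)%N -> l j.+1 = 0.
    by move=> iN; exact: (psumr_eq0P (fun k _ => l0' _ (ltn_ord k)) rz (i := Ordinal iN) isT).
  rewrite big1 ?addr0; last by move=> i _; rewrite z // scale0r.
  by move: l1; rewrite -/r rz addr0 => ->; rewrite scale1r; apply: AC; apply: Aq.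
have rpos : 0 < r by rewrite lt_def rp r0.
have := IH (fun i => l i.+1 / r) (fun i => q i.+1).
have -> : \sum_(i < N) (l i.+1 / r) *: q i.+1 = r^-1 *: \sum_(i < N) l i.+1 *: q i.+1.
  by rewrite scaler_sumr; apply: eq_bigr => i _; rewrite scalerA mulrC.
move=> /(_ _) Cp.
have Cp' : C (r^-1 *: \sum_(i < N) l i.+1 *: q i.+1).
  apply: Cp; split.
  - by move=> i iN; apply: Aq'.
  - by move=> i iN; apply: divr_ge0 => //; apply: l0'.
  - by rewrite -mulr_suml -/r divff.
have := Cc _ _ r Cp' (AC _ (Aq 0%N isT)) r0.
have -> : (1 - r) = l 0%N by rewrite -l1 -/r addrK.
rewrite scalerA divff // scale1r addrC; apply.
by rewrite -l1 -/r lerDr; apply: l0.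
Qed.


Definition CCany (A : set V) : set V :=
  [set p | exists N l q, isCC A N l q /\ p = \sum_(i < N) l i *: q i].

Lemma CCany_convex A : convexs (CCany A).
Proof.
move=> x y t [N1 [l1 [q1 [[A1 p1 s1] ->]]]] [N2 [l2 [q2 [[A2 p2 s2] ->]]]] t0 t1.
exists (N1 + N2)%N, (fun i => if (i < N1)%N then t * l1 i else (1 - t) * l2 (i - N1)%N),
  (fun i => if (i < N1)%N then q1 i else q2 (i - N1)%N).
split; first split.
- move=> i iN; case: ifP => h; first exact: A1.
  by apply: A2; rewrite ltn_subLR // leqNgt h.
- move=> i iN; case: ifP => h; first by rewrite mulr_ge0 // p1.
  by rewrite mulr_ge0 ?subr_ge0 // p2 // ltn_subLR // leqNgt h.
- rewrite (sum_split (fun i => if (i < N1)%N then t * l1 i else (1 - t) * l2 (i - N1)%N)).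
  rewrite (eq_bigr (fun i : 'I_N1 => t * l1 i)); last by move=> i _; rewrite ltn_ord.
  rewrite (eq_bigr (fun i : 'I_N2 => (1 - t) * l2 i)); last first.
    by move=> i _; rewrite ltnNge leq_addr /= addKn.
  rewrite -!mulr_sumr s1 s2 !mulr1; lra.
rewrite (sum_split (fun i => (if (i < N1)%N then t * l1 i else (1 - t) * l2 (i - N1)%N) *:
   (if (i < N1)%N then q1 i else q2 (i - N1)%N))).
rewrite !scaler_sumr; congr (_ + _).
  by apply: eq_bigr => i _; rewrite ltn_ord scalerA.
by apply: eq_bigr => i _; rewrite ltnNge leq_addr /= addKn scalerA.
Qed.

Lemma convhull_CCany A : convhull A `<=` CCany A.
Proof.
move=> p /(_ (CCany A) (@CCany_convex A)); apply => a Aa.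
exists 1%N, (fun=> 1), (fun=> a); split; last by rewrite big_ord1 scale1r.
by split => [i _|i _|]; rewrite ?big_ord1.
Qed.

Lemma isCC_pos A N l q : isCC A N l q -> (0 < N)%N.
Proof.
case: N => // -[_ _]; rewrite big_ord0 => /eqP; by rewrite eq_sym oner_eq0.
Qed.

Lemma CC_pad A N M l q : (N <= M)%N -> isCC A N l q -> exists l' q',
  isCC A M l' q' /\ \sum_(i < N) l i *: q i = \sum_(i < M) l' i *: q' i.
Proof.
move=> NM CC; have N0 := isCC_pos CC; case: CC => Aq l0 l1.
have [d ->] : exists d, M = (N + d)%N by exists (M - N)%N; rewrite subnKC.
exists (fun i => if (i < N)%N then l i else 0), (fun i => if (i < N)%N then q i else q 0%N).
split; first split.
- by move=> i _; case: ifP => h; apply: Aq.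
- by move=> i _; case: ifP => h //; apply: l0.
- rewrite (sum_split (fun i => if (i < N)%N then l i else 0)) [X in _ + X]big1 ?addr0.
    by rewrite -l1; apply: eq_bigr => i _; rewrite ltn_ord.
  by move=> i _; rewrite ltnNge leq_addr.
rewrite (sum_split (fun i => (if (i < N)%N then l i else 0) *: (if (i < N)%N then q i else q 0%N))).
rewrite [X in _ = _ + X]big1 ?addr0.
  by apply: eq_bigr => i _; rewrite ltn_ord.
by move=> i _; rewrite ltnNge leq_addr /= scale0r.
Qed.


Lemma ex_min (N : nat) (c : nat -> bool) (f : nat -> R) :
  (exists i, (i < N)%N /\ c i) ->
  exists i0, [/\ (i0 < N)%N, c i0 & forall i, (i < N)%N -> c i -> f i0 <= f i].
Proof.
elim: N => [[i [//]]|N IH] ex.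
case: (pselect (exists i, (i < N)%N /\ c i)) => [/IH [i0 [i0N ci0 mi0]]|nex].
  case: (boolP (c N && (f N < f i0))) => [/andP [cN lt]|h].
    exists N; split => // i; rewrite ltnS leq_eqVlt => /orP [/eqP -> //|iN ci].
    by apply: (le_trans (ltW lt)); apply: mi0.
  exists i0; split => //; first by apply: (ltn_trans i0N).
  move=> i; rewrite ltnS leq_eqVlt => /orP [/eqP -> cN|iN ci]; last by apply: mi0.
  by move: h; rewrite cN /= -leNgt.
case: ex => i [iN ci]; move: iN; rewrite ltnS leq_eqVlt => /orP [/eqP ei|iN]; last first.
  by exfalso; apply: nex; exists i.
subst i; exists N; split => // i; rewrite ltnS leq_eqVlt => /orP [/eqP -> //|iN ci'].
by exfalso; apply: nex; exists i.
Qed.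

Lemma CC_reduce A N l q : (n.+1 < N.+1)%N -> isCC A N.+1 l q ->
  exists l' q', isCC A N l' q' /\ \sum_(i < N.+1) l i *: q i = \sum_(i < N) l' i *: q' i.
Proof.
move=> nN [Aq l0 l1].
pose X := \matrix_(i < N.+1) q i.
pose Q := row_mx X (const_mx 1 : 'M[R]_(N.+1, 1)).
have rk : (\rank Q < N.+1)%N.
  by apply: leq_ltn_trans (rank_leq_col Q) _; rewrite addn1.
have kQ : kermx Q != 0.
  by rewrite kermx_eq0; apply/negP => /eqP rkE; move: rk; rewrite rkE ltnn.
have [r0 nz] : exists i, row i (kermx Q) != 0.
  case: (pselect (exists i, row i (kermx Q) != 0)) => [//|nex]; exfalso.
  move/negP: kQ; apply; apply/eqP/row_matrixP => i; rewrite row0.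
  by apply/eqP/negPn/negP => h; apply: nex; exists i.
pose mu := row r0 (kermx Q).
have muQ : mu *m Q = 0 by rewrite -row_mul mulmx_ker row0.
move: muQ; rewrite mul_mx_row => /eqP; rewrite row_mx_eq0 => /andP [/eqP muX /eqP mu1].
pose m_ i := mu 0 (inord i).
have sum_mq : \sum_(i < N.+1) m_ i *: q i = 0.
  rewrite -[RHS]muX mulmx_sum_row; apply: eq_bigr => i _; by rewrite /m_ inord_val rowK.
have sum_m : \sum_(i < N.+1) m_ i = 0.
  have := congr1 (fun M : matrix R 1 1 => M 0 0) mu1; rewrite !mxE => e; rewrite -[RHS]e.
  by apply: eq_bigr => i _; rewrite /m_ inord_val [const_mx _ _ _]mxE mulr1.
have [j [jN mj]] : exists j, (j < N.+1)%N /\ 0 < m_ j.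
  case: (pselect (exists j, (j < N.+1)%N /\ 0 < m_ j)) => [//|nex]; exfalso.
  have neg i : (i < N.+1)%N -> m_ i <= 0.
    by move=> iN; rewrite leNgt; apply/negP => h; apply: nex; exists i.
  have z i : (i < N.+1)%N -> m_ i = 0.
    move=> iN; apply/eqP; rewrite -oppr_eq0; apply/eqP.
    have sN : \sum_(k < N.+1) - m_ k = 0 by rewrite sumrN sum_m oppr0.
    have hn (k : 'I_N.+1) : true -> 0 <= - m_ k by move=> _; rewrite oppr_ge0 neg.
    exact: (psumr_eq0P hn sN (i := Ordinal iN) isT).
  move/negP: nz; apply; apply/eqP/rowP => k; rewrite [RHS]mxE.
  have := z k (ltn_ord k); rewrite /m_ inord_val; exact.
have [j0 [j0N mj0 minj0]] := @ex_min N.+1 (fun i => 0 < m_ i) (fun i => l i / m_ i)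
  (ex_intro _ j (conj jN mj)).
pose t := l j0 / m_ j0.
have t0 : 0 <= t by apply: divr_ge0; [exact: l0|exact: ltW].
pose l' i := l i - t * m_ i.
have l'0 i : (i < N.+1)%N -> 0 <= l' i.
  move=> iN; rewrite /l' subr_ge0; case: (ltP 0 (m_ i)) => mi.
    by rewrite -ler_pdivlMr //; apply: minj0.
  by apply: (le_trans (mulr_ge0_le0 t0 mi)); apply: l0.
have l'j0 : l' j0 = 0 by rewrite /l' /t divfK ?subrr // gt_eqF.
have sl' : \sum_(i < N.+1) l' i = 1.
  by rewrite /l' sumrB -mulr_sumr sum_m mulr0 subr0.
have sq : \sum_(i < N.+1) l' i *: q i = \sum_(i < N.+1) l i *: q i.
  rewrite /l' (eq_bigr (fun i : 'I_N.+1 => l i *: q i - t *: (m_ i *: q i))); last first.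
    by move=> i _; rewrite scalerBl scalerA.
  by rewrite sumrB -scaler_sumr sum_mq scaler0 subr0.
have hb i : (i < N)%N -> (bump j0 i < N.+1)%N.
  by move=> hi; exact: (ltn_ord (lift (Ordinal j0N) (Ordinal hi))).
exists (fun i => l' (bump j0 i)), (fun i => q (bump j0 i)); split; first split.
- by move=> i /hb; apply: Aq.
- by move=> i /hb; apply: l'0.
- by move: sl'; rewrite (sum_remove l' j0N) l'j0 add0r.
by rewrite -sq (sum_remove (fun i => l' i *: q i) j0N) l'j0 scale0r add0r.
Qed.

Lemma CC_cara A N l q : isCC A N l q -> exists l' q',
  isCC A n.+1 l' q' /\ \sum_(i < N) l i *: q i = \sum_(i < n.+1) l' i *: q' i.
Proof.
elim: N l q => [l q /isCC_pos //|N IH l q CC].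
case: (leqP N.+1 n.+1) => h; first exact: CC_pad.
have [l' [q' [CC' ->]]] := CC_reduce h CC.
exact: IH.
Qed.

Lemma convhull_CC A p : convhull A p -> exists l q,
  isCC A n.+1 l q /\ p = \sum_(i < n.+1) l i *: q i.
Proof.
move=> /convhull_CCany [N [l [q [CC ->]]]]; exact: CC_cara.
Qed.

End Conv.
Section Dyad.
Variables (R : realType) (n : nat).
Notation V := 'rV[R]_n.

Lemma sum_recr (T : zmodType) (F : nat -> T) N :
  \sum_(i < N.+1) F i = \sum_(i < N) F i + F N.
Proof. by rewrite big_ord_recr. Qed.

Lemma nsum_recr (F : nat -> nat) N :
  (\sum_(i < N.+1) F i = \sum_(i < N) F i + F N)%N.
Proof. by rewrite big_ord_recr. Qed.

Lemma nat_split N (c : nat -> nat) a : (a <= \sum_(i < N) c i)%N ->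
  exists c1 : nat -> nat, (forall i, c1 i <= c i)%N /\ (\sum_(i < N) c1 i)%N = a.
Proof.
elim: N a => [a|N IH a].
  rewrite big_ord0 leqn0 => /eqP ->; exists (fun=> 0%N); split => //.
  by rewrite big_ord0.
rewrite (nsum_recr c) => ha.
case: (leqP a (\sum_(i < N) c i)%N) => h.
  have [c1 [c1c s1]] := IH _ h.
  exists (fun i => if i == N then 0%N else c1 i); split.
    by move=> i; case: ifP.
  rewrite (nsum_recr (fun i => if i == N then 0%N else c1 i)) eqxx addn0 -s1; apply: eq_bigr => i _.
  by rewrite ifN // neq_ltn ltn_ord.
exists (fun i => if i == N then (a - \sum_(i < N) c i)%N else c i); split.
  by move=> i; case: ifP => // /eqP ->; rewrite leq_subLR.
rewrite (nsum_recr (fun i => if i == N then (a - \sum_(i < N) c i)%N else c i)) eqxx (eq_bigr (fun i : 'I_N => c i)); last first.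
  by move=> i _; rewrite ifN // neq_ltn ltn_ord.
by rewrite subnKC // ltnW.
Qed.

Definition w (k : nat) : R := ((2 ^ k)%N%:R)^-1.

Lemma w_gt0 k : 0 < w k.
Proof. by rewrite /w invr_gt0 ltr0n expn_gt0. Qed.

Lemma wS k : w k.+1 = w k / 2.
Proof. by rewrite /w expnS natrM invfM mulrC. Qed.

Fixpoint Avg (k : nat) (A : set V) : set V :=
  if k is k'.+1 then
    [set z | exists u w, Avg k' A u /\ Avg k' A w /\ z = (1/2) *: (u + w)]
  else A.

Lemma Avg0 (A : set V) N (c : nat -> nat) (s : nat -> V) :
  (forall i, (i < N)%N -> A (s i)) -> (\sum_(i < N) c i = 1)%N ->
  A (\sum_(i < N) (c i)%:R *: s i).
Proof.
elim: N => [|N IH] As; first by rewrite big_ord0.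
rewrite (nsum_recr c) (sum_recr (fun i => (c i)%:R *: s i)).
case: (posnP (c N)) => cN.
  rewrite cN addn0 scale0r addr0 => h; apply: IH => // i iN.
  by apply: As; apply: ltnW.
move=> h.
have s0 : (\sum_(i < N) c i = 0)%N.
  by move: h cN; lia.
have c1 : c N = 1%N by move: h; rewrite s0 add0n.
rewrite big1; last first.
  move=> i _; move/eqP: s0; rewrite sum_nat_eq0 => /forallP /(_ i) /eqP ->.
  by rewrite scale0r.
by rewrite add0r c1 scale1r; apply: As.
Qed.

Lemma AvgW (A : set V) N (s : nat -> V) k : (forall i, (i < N)%N -> A (s i)) ->
  forall c : nat -> nat, (\sum_(i < N) c i = 2 ^ k)%N ->
  Avg k A (\sum_(i < N) ((c i)%:R * w k) *: s i).
Proof.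
move=> As; elim: k => [|k IH] c hc /=.
  rewrite /w expn0 invr1; under eq_bigr do rewrite mulr1.
  have hc1 : (\sum_(i < N) c i = 1)%N by rewrite hc expn0.
  exact: (@Avg0 A N c s As hc1).
have hk : (2 ^ k <= \sum_(i < N) c i)%N by rewrite hc expnS mul2n -addnn leq_addr.
have [c1 [c1c s1]] := @nat_split N c (2 ^ k)%N hk.
pose c2 i := (c i - c1 i)%N.
have s2 : (\sum_(i < N) c2 i = 2 ^ k)%N.
  apply/eqP; rewrite -(eqn_add2l (2 ^ k)) -{1}s1 -big_split /=.
  rewrite (eq_bigr (fun i : 'I_N => c i)); last by move=> i _; rewrite /c2 subnKC.
  by rewrite hc expnS mul2n -addnn.
exists (\sum_(i < N) ((c1 i)%:R * w k) *: s i), (\sum_(i < N) ((c2 i)%:R * w k) *: s i).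
split; first exact: IH.
split; first exact: IH.
rewrite -big_split scaler_sumr; apply: eq_bigr => i _.
rewrite /= -scalerDl scalerA; congr (_ *: _).
by rewrite /c2 wS -mulrDl -natrD subnKC //; field.
Qed.


Lemma round m (l : nat -> R) k : (forall i, (i < m.+1)%N -> 0 <= l i) ->
  \sum_(i < m.+1) l i = 1 ->
  exists c : nat -> nat, (\sum_(i < m.+1) c i = 2 ^ k)%N /\
    \sum_(i < m.+1) `|l i - (c i)%:R * w k| <= (2 * m)%:R * w k.
Proof.
move=> l0 l1.
pose D : R := (2 ^ k)%N%:R.
have D0 : 0 < D by rewrite ltr0n expn_gt0.
have wD : w k = D^-1 by [].
pose f i := Num.truncn (l i * D).
have fi i : (i < m.+1)%N -> (f i)%:R * w k <= l i /\ l i < (f i)%:R * w k + w k.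
  move=> im; have /andP [h1 h2] := truncn_itv (mulr_ge0 (l0 i im) (ltW D0)).
  rewrite wD; split; first by rewrite ler_pdivrMr.
  by rewrite -[X in _ < _ + X]mul1r -mulrDl natr1 ltr_pdivlMr.
pose F := (\sum_(i < m) f i)%N.
have FD : (F <= 2 ^ k)%N.
  rewrite -(ler_nat R) /F natr_sum -/D.
  apply: (@le_trans _ _ (\sum_(i < m) l i * D)).
    by apply: ler_sum => i _; have /andP [] := truncn_itv (mulr_ge0 (l0 i (ltnW (ltn_ord i))) (ltW D0)).
  rewrite -mulr_suml ler_piMl // -l1 (sum_recr l) lerDl; apply: l0; exact: ltnSn.
exists (fun i => if (i < m)%N then f i else (2 ^ k - F)%N); split.
  rewrite (nsum_recr (fun i => if (i < m)%N then f i else (2 ^ k - F)%N)) ltnn.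
  rewrite (eq_bigr (fun i : 'I_m => f i)); last by move=> i _; rewrite ltn_ord.
  by rewrite subnKC.
rewrite (sum_recr (fun i => `|l i - (if (i < m)%N then f i else (2 ^ k - F)%N)%:R * w k|)) ltnn.
rewrite (eq_bigr (fun i : 'I_m => l i - (f i)%:R * w k)); last first.
  move=> i _; rewrite ltn_ord ger0_norm // subr_ge0.
  by have [] := fi i (ltnW (ltn_ord i)).
have e1 : \sum_(i < m) (l i - (f i)%:R * w k) <= m%:R * w k.
  rewrite mulr_natl -[in X in _ <= _ *+ X](card_ord m) -sumr_const.
  by apply: ler_sum => i _; have [_ h] := fi i (ltnW (ltn_ord i)); lra.
have e0 : 0 <= \sum_(i < m) (l i - (f i)%:R * w k).
  by apply: sumr_ge0 => i _; rewrite subr_ge0; have [] := fi i (ltnW (ltn_ord i)).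
have last : l m - (2 ^ k - F)%N%:R * w k = - \sum_(i < m) (l i - (f i)%:R * w k).
  rewrite natrB // mulrBl -/D wD mulfV ?gt_eqF // sumrB -mulr_suml /F natr_sum.
  move: l1; rewrite (sum_recr l) => l1.
  have -> : l m = 1 - \sum_(i < m) l i by rewrite -l1 addrC addKr.
  lra.
rewrite last normrN ger0_norm // natrM; lra.
Qed.

Definition n1 (v : V) : R := \sum_(i < n) `|v 0 i|.

Lemma n1_ge0 v : 0 <= n1 v.
Proof. by apply: sumr_ge0 => i _. Qed.

Lemma n1D u v : n1 (u + v) <= n1 u + n1 v.
Proof. by rewrite /n1 -big_split /=; apply: ler_sum => i _; rewrite mxE ler_normD. Qed.

Lemma n1Z (t : R) u : n1 (t *: u) = `|t| * n1 u.
Proof. by rewrite /n1 mulr_sumr; apply: eq_bigr => i _; rewrite mxE normrM. Qed.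

Lemma n1N u : n1 (- u) = n1 u.
Proof. by rewrite /n1; apply: eq_bigr => i _; rewrite mxE normrN. Qed.

Lemma n1_sum N (F : nat -> V) : n1 (\sum_(i < N) F i) <= \sum_(i < N) n1 (F i).
Proof.
elim: N => [|N IH]; first by rewrite !big_ord0 /n1 big1 // => i _; rewrite mxE normr0.
rewrite (sum_recr F) (sum_recr (fun i => n1 (F i))).
by apply: (le_trans (n1D _ _)); rewrite lerD2r.
Qed.

Lemma enorm_n1 v : enorm v <= n1 v.
Proof.
rewrite /enorm -(ger0_norm (n1_ge0 v)) -sqrtr_sqr ler_sqrt ?sqr_ge0 // /dotv /n1 expr2 mulr_suml.
apply: ler_sum => i _.
apply: (le_trans (ler_norm _)); rewrite normrM ler_wpM2l //.
by rewrite (bigD1 i) //= lerDl; apply: sumr_ge0.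
Qed.

End Dyad.
Section Iter.
Variables (R : realType) (n : nat) (H : 'M[R]_n).
Notation V := 'rV[R]_n.
Notation P := (P H).

Lemma fibsymE (C : set V) z : fibsym H C z <->
  exists a b, C a /\ C b /\ P a = P b /\ z = P a + (1/2) *: (a - b).
Proof.
split.
  move=> [x xH [z1 [z2 [[a [[Ca /(stransP _ xH) Pa] ->]] [[c [[[b Cb <-] /(stransP _ xH) Pc] ->]] ->]]]]].
  exists a, b; rewrite -(P_refl H b) Pc Pa; do !split => //.
  rewrite reflE -(P_refl H b) Pc -Pa.
    by move: (P a) => p; apply/rowP => i; rewrite !mxE; field.
move=> [a [b [Ca [Cb [Pab ->]]]]].
exists (P a); first exact: P_sub.
exists ((1/2) *: a), ((1/2) *: refl H b); split.
  by exists a; split => //; split => //; apply/stransP => //; exact: P_sub.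
split.
  exists (refl H b); split => //; split; first by exists b.
  by apply/stransP; [exact: P_sub| rewrite P_refl].
rewrite reflE -Pab.
by move: (P a) => p; apply/rowP => i; rewrite !mxE; field.
Qed.

Variable K : set V.

Definition S (x : V) : set V :=
  [set s | exists a b, K a /\ K b /\ P a = x /\ P b = x /\ s = (1/2) *: (a - b)].

Definition E (k : nat) : set V :=
  [set z | exists x, P x = x /\ exists u, Avg k (S x) u /\ z = x + u].

Lemma Avg_P0 k x u : Avg k (S x) u -> P u = 0.
Proof.
elim: k u => [|k IH] u /=.
  move=> [a [b [_ [_ [Pa [Pb ->]]]]]]; by rewrite PZ PB Pa Pb subrr scaler0.
by move=> [u1 [u2 [/IH h1 [/IH h2 ->]]]]; rewrite PZ PD h1 h2 addr0 scaler0.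
Qed.

Lemma Avg_N k x u : Avg k (S x) u -> Avg k (S x) (- u).
Proof.
elim: k u => [|k IH] u /=.
  move=> [a [b [Ka [Kb [Pa [Pb ->]]]]]]; exists b, a; do !split => //.
  by apply/rowP => i; rewrite !mxE; field.
move=> [u1 [u2 [/IH h1 [/IH h2 ->]]]]; exists (- u1), (- u2); do !split => //.
by apply/rowP => i; rewrite !mxE; field.
Qed.

Lemma iterE k : iter k.+1 (fibsym H) K = E k.
Proof.
elim: k => [|k IH].
  apply/seteqP; split => z /=.
    move=> /fibsymE [a [b [Ka [Kb [Pab ->]]]]].
    exists (P a); split; first exact: PP.
    exists ((1/2) *: (a - b)); split => //.
    by exists a, b; do !split.
  move=> [x [Px [u [[a [b [Ka [Kb [Pa [Pb ->]]]]] ->]]]]].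
  apply/fibsymE; exists a, b; do !split => //; first by rewrite Pa Pb.
  by rewrite Pa.
rewrite iterS IH; apply/seteqP; split => z /=.
  move=> /fibsymE [a [b [[x [Px [u [Au ->]]]] [[x' [Px' [w [Aw ->]]]] [Pab ->]]]]].
  move: Pab; rewrite !PD (Avg_P0 Au) (Avg_P0 Aw) !addr0 Px Px' => xx; subst x'.
  exists x; split => //; exists ((1/2) *: (u + - w)); split.
    by exists u, (- w); do !split => //; exact: Avg_N.
  by apply/rowP => i; rewrite !mxE; field.
move=> [x [Px [u [[u1 [u2 [A1 [A2 ->]]]] ->]]]].
apply/fibsymE; exists (x + u1), (x - u2).
have P1 : P (x + u1) = x by rewrite PD (Avg_P0 A1) addr0.
have P2 : P (x - u2) = x by rewrite PB (Avg_P0 A2) subr0.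
split; first by exists x; split => //; exists u1.
split; first by exists x; split => //; exists (- u2); split => //; exact: Avg_N.
split; first by rewrite P1 P2.
by rewrite P1; apply/rowP => i; rewrite !mxE; field.
Qed.

End Iter.
Section Topo.
Variables (R : realType).

Lemma cont_sum {T : topologicalType} {W : normedModType R} (I : Type) (s : seq I)
  (F : I -> T -> W) : (forall i, continuous (F i)) ->
  continuous (fun x => \sum_(i <- s) F i x).
Proof.
move=> Fc; elim: s => [|i s IH].
  by under eq_fun do rewrite big_nil; exact: cst_continuous.
under eq_fun do rewrite big_cons.
by move=> x; apply: continuousD; [exact: Fc|exact: IH].
Qed.

Lemma fst_cont {U W : topologicalType} : continuous (@fst U W).
Proof. by move=> [x y]; exact: cvg_fst. Qed.

Lemma snd_cont {U W : topologicalType} : continuous (@snd U W).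
Proof. by move=> [x y]; exact: cvg_snd. Qed.

Lemma mulmx_cont n m (M : 'M[R]_(n, m)) : continuous (fun v : 'rV[R]_n => v *m M).
Proof.
have -> : (fun v : 'rV[R]_n => v *m M) = (fun v => \sum_(i <- index_enum 'I_n) v 0 i *: row i M).
  by apply: funext => v; rewrite mulmx_sum_row.
apply: cont_sum => i v; apply: continuousZr_tmp; exact: coord_continuous.
Qed.

Lemma entry_le_norm n (v : 'rV[R]_n) i : `|v 0 i| <= `|v|.
Proof.
rewrite [leRHS]/Num.norm /= mx_normrE; apply/bigmax_geP; right => /=.
by exists (0, i).
Qed.

Section helpers.
Context {T : topologicalType} {W : normedModType R}.
Lemma contD (f g : T -> W) : continuous f -> continuous g -> continuous (fun x => f x + g x).
Proof. by move=> fc gc x; exact: (continuousD (fc x) (gc x)). Qed.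
Lemma contB (f g : T -> W) : continuous f -> continuous g -> continuous (fun x => f x - g x).
Proof. by move=> fc gc x; exact: (continuousB (fc x) (gc x)). Qed.
Lemma contZl (k : R) (f : T -> W) : continuous f -> continuous (fun x => k *: f x).
Proof. by move=> fc x; apply: continuousZl_tmp; exact: fc. Qed.
Lemma contZ (s : T -> R) (f : T -> W) : continuous s -> continuous f -> continuous (fun x => s x *: f x).
Proof. by move=> sc fc x; exact: (continuousZ (sc x) (fc x)). Qed.
End helpers.

Lemma contcomp {T U W : topologicalType} (f : T -> U) (g : U -> W) :
  continuous f -> continuous g -> continuous (fun x => g (f x)).
Proof. by move=> fc gc x; exact: (continuous_comp (fc x) (gc (f x))). Qed.

End Topo.
Section Main.
Variables (R : realType) (n : nat) (H : 'M[R]_n) (K : set 'rV[R]_n).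
Notation V := 'rV[R]_n.
Notation P := (P H).
Notation S := (S H K).
Notation E := (E H K).

Definition LL := \bigcup_(x in subsp H) convhull (E 0 `&` strans (orthc H) x).

Lemma E0_fiber x z : (x <= H)%MS -> E 0 z -> strans (orthc H) x z -> S x (z - x).
Proof.
move=> xH [x' [Px' [u [Su ->]]]] /(stransP _ xH).
rewrite PD (Avg_P0 Su) addr0 Px' => ex; subst x'.
by rewrite addrC addKr.
Qed.

Lemma Avg_conv x k u C : P x = x -> convexs C ->
  (E 0 `&` strans (orthc H) x) `<=` C -> Avg k (S x) u -> C (x + u).
Proof.
move=> Px Cc sAC; elim: k u => [|k IH] u /=.
  move=> Su; apply: sAC; split; first by exists x; split => //; exists u.
  by apply/stransP; [rewrite -Px; exact: P_sub|rewrite PD (@Avg_P0 _ _ H K 0 x u Su) addr0].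
move=> [u1 [u2 [A1 [A2 ->]]]].
have := Cc _ _ (1/2) (IH _ A1) (IH _ A2).
have -> : (1 / 2) *: (x + u1) + (1 - 1 / 2) *: (x + u2) = x + (1 / 2) *: (u1 + u2).
  by apply/rowP => i; rewrite !mxE; field.
by apply => //; lra.
Qed.

Lemma KsubL k : iter k.+1 (fibsym H) K `<=` LL.
Proof.
rewrite iterE => z [x [Px [u [Au ->]]]].
exists x.
  rewrite /subsp /=. rewrite -Px. exact: P_sub.
by move=> C Cc sAC; exact: Avg_conv Cc sAC Au.
Qed.

Hypothesis cK : compact K.

Lemma K_bound : exists B, 0 <= B /\ forall x s, S x s -> n1 s <= B.
Proof.
have [M [_ HM]] := compact_bounded cK.
pose B0 := Num.max (M + 1) 0.
have hM a : K a -> `|a| <= B0.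
  move=> Ka; apply: (le_trans (HM (M + 1) _ a Ka)); last by rewrite le_max lexx.
  by rewrite ltrDl.
have hB a : K a -> n1 a <= n%:R * B0.
  move=> Ka; rewrite mulr_natl -[in X in _ <= _ *+ X](card_ord n) -sumr_const /n1.
  by apply: ler_sum => i _; apply: le_trans (entry_le_norm _ _) (hM _ Ka).
exists (n%:R * B0); split; first by rewrite mulr_ge0 // le_max lexx orbT.
move=> x s [a [b [Ka [Kb [_ [_ ->]]]]]].
rewrite n1Z; apply: (le_trans (ler_wpM2l _ (n1D _ _))); first by rewrite normr_ge0.
rewrite n1N; have := hB _ Ka; have := hB _ Kb; rewrite ger0_norm; last by [].
lra.
Qed.

Lemma approx : exists B, 0 <= B /\ forall k p, LL p ->
  exists z, iter k.+1 (fibsym H) K z /\ enorm (p - z) <= B * ((2 * n)%:R * w R k).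
Proof.
have [B [B0 hB]] := K_bound.
exists B; split => // k p [x xH hp].
have [l [q [[Aq l0 l1] ->]]] := convhull_CC hp.
pose s i := q i - x.
have Ss i : (i < n.+1)%N -> S x (s i).
  by move=> hi; have [h1 h2] := Aq i hi; exact: E0_fiber xH h1 h2.
have [c [hc hr]] := round k l0 l1.
exists (x + \sum_(i < n.+1) ((c i)%:R * w R k) *: s i); split.
  rewrite iterE; exists x; split; first exact: P_id.
  by eexists; split; last reflexivity; exact: (AvgW Ss hc).
have -> : \sum_(i < n.+1) l i *: q i - (x + \sum_(i < n.+1) ((c i)%:R * w R k) *: s i)
    = \sum_(i < n.+1) (l i - (c i)%:R * w R k) *: s i.
  have -> : \sum_(i < n.+1) l i *: q i = x + \sum_(i < n.+1) l i *: s i.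
    rewrite (eq_bigr (fun i : 'I_n.+1 => l i *: x + l i *: s i)); last first.
      by move=> i _; rewrite -scalerDr /s [x + _]addrC subrK.
    by rewrite big_split /= -scaler_suml l1 scale1r.
  rewrite [x + _]addrC addrKA -sumrB; apply: eq_bigr => i _; by rewrite scalerBl.
apply: (le_trans (enorm_n1 _)).
apply: (le_trans (n1_sum n.+1 (fun i => (l i - (c i)%:R * w R k) *: s i))).
rewrite (eq_bigr (fun i : 'I_n.+1 => `|l i - (c i)%:R * w R k| * n1 (s i))); last first.
  by move=> i _; rewrite n1Z.
apply: (@le_trans _ _ (\sum_(i < n.+1) `|l i - (c i)%:R * w R k| * B)).
  by apply: ler_sum => i _; apply: ler_wpM2l => //; exact: hB (Ss _ (ltn_ord i)).
by rewrite -mulr_suml mulrC; apply: ler_wpM2l.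
Qed.

End Main.
Section Compact.
Variables (R : realType) (n : nat) (H : 'M[R]_n) (K : set 'rV[R]_n).
Notation V := 'rV[R]_n.
Notation P := (P H).
Notation E := (E H K).
Hypothesis cK : compact K.

Lemma closed_level {T : topologicalType} (g : T -> R) (y : R) : continuous g ->
  closed [set t | g t = y].
Proof. by move=> gc; apply: (@preimage_closed _ _ g [set x | x = y]) => //; exact: closed_eq. Qed.

Lemma P_cont : continuous P.
Proof. exact: mulmx_cont. Qed.

Lemma E0_compact : compact (E 0).
Proof.
pose Kp := (K `*` K) `&` [set ab : V * V | `|P ab.1 - P ab.2| = 0].
pose h (ab : V * V) := P ab.1 + (1/2) *: (ab.1 - ab.2).
have -> : E 0 = h @` Kp.
  rewrite -(iterE H K 0); apply/seteqP; split => z.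
    move=> /fibsymE [a [b [Ka [Kb [Pab ->]]]]]; exists (a, b) => //.
    by split => //=; rewrite Pab subrr normr0.
  move=> [[a b] [[/= Ka Kb] /= /normr0_eq0 /eqP]]; rewrite subr_eq0 => /eqP Pab <-.
  by apply/fibsymE; exists a, b.
apply: continuous_compact.
  apply: continuous_subspaceT; apply: contD.
    exact: (contcomp fst_cont P_cont).
  by apply: contZl; apply: contB; [exact: fst_cont|exact: snd_cont].
apply: compact_closedI; first exact: compact_setX.
apply: closed_level; apply: (contcomp _ (@norm_continuous _ _)).
by apply: contB; [exact: (contcomp fst_cont P_cont)|exact: (contcomp snd_cont P_cont)].
Qed.

Notation D := (prod_topology (fun _ : 'I_n.+1 => (R * V)%type)).

Lemma projc (i : 'I_n.+1) : continuous (fun f : D => f i).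
Proof. move=> f; exact: (@proj_continuous _ (fun _ => (R * V)%type) i f). Qed.

Lemma g_cont : continuous (fun f : D => \sum_(i < n.+1) (f i).1 *: (f i).2).
Proof.
apply: cont_sum => i; apply: contZ.
  exact: (contcomp (projc (i:=i)) fst_cont).
exact: (contcomp (projc (i:=i)) snd_cont).
Qed.

Lemma LL_compact : compact (LL H K).
Proof.
pose T1 := [set f : D | forall i, (`[0, 1]%classic `*` E 0) (f i)].
pose T2 := [set f : D | \sum_(i < n.+1) (f i).1 = 1].
pose T3 := \bigcap_(i in [set: 'I_n.+1]) [set f : D | `|P (f i).2 - P (f ord0).2| = 0].
pose g := fun f : D => \sum_(i < n.+1) (f i).1 *: (f i).2.
have -> : LL H K = g @` (T1 `&` (T2 `&` T3)).
  apply/seteqP; split => p.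
    move=> [x xH /convhull_CC [l [q [[Aq l0 l1] ->]]]].
    exists (fun i : 'I_n.+1 => (l i, q i)); last by [].
    have Pq i : (i < n.+1)%N -> P (q i) = x.
      by move=> hi; have [_ /(stransP _ xH)] := Aq i hi.
    split; last split.
    - move=> i; split; last by have [] := Aq i (ltn_ord i).
      rewrite /= in_itv /= l0 //=; rewrite -l1 (bigD1 i) //= lerDl.
      by apply: sumr_ge0 => j _; apply: l0.
    - exact: l1.
    - by move=> i _ /=; rewrite Pq // Pq // subrr normr0.
  move=> [f [T1f [T2f T3f]] <-].
  pose x := P (f ord0).2.
  have xH : (x <= H)%MS by exact: P_sub.
  exists x => //.
  pose l i := (f (inord i)).1; pose q i := (f (inord i)).2.
  have -> : g f = \sum_(i < n.+1) l i *: q i.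
    by apply: eq_bigr => i _; rewrite /l /q inord_val.
  apply: CC_convhull; split.
  - move=> i hi; split; first by have [] := T1f (inord i).
    apply/stransP => //; have := T3f (inord i) I; rewrite /= => /normr0_eq0/eqP.
    by rewrite subr_eq0 => /eqP.
  - move=> i hi; by have [/= ] := T1f (inord i); rewrite in_itv /= => /andP [].
  - by rewrite -T2f; apply: eq_bigr => i _; rewrite /l inord_val.
apply: continuous_compact; first exact: continuous_subspaceT g_cont.
apply: compact_closedI.
  have := @tychonoff _ (fun _ : 'I_n.+1 => (R * V)%type) (fun i => `[0, 1]%classic `*` E 0).
  apply => i; apply: compact_setX; [exact: segment_compact|exact: E0_compact].
apply: closedI.
  apply: closed_level; apply: cont_sum => i.
  exact: (contcomp (projc (i:=i)) fst_cont).
apply: closed_bigI => i _; apply: closed_level.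
apply: (contcomp _ (@norm_continuous _ _)); apply: contB.
  exact: (contcomp (contcomp (projc (i:=i)) snd_cont) P_cont).
exact: (contcomp (contcomp (projc (i:=ord0)) snd_cont) P_cont).
Qed.

End Compact.
Section Final.
Variables (R : realType) (n : nat) (H : 'M[R]_n) (K : set 'rV[R]_n).
Notation V := 'rV[R]_n.
Notation P := (P H).
Notation E := (E H K).

Lemma refl_E0 z : E 0 z -> E 0 (refl H z).
Proof.
move=> [x [Px [u [Su ->]]]]; exists x; split => //.
exists (- u); split; first exact: (@Avg_N _ _ H K 0).
rewrite reflE PD (@Avg_P0 _ _ H K 0 x u Su) addr0 Px.
by apply/rowP => i; rewrite !mxE; field.
Qed.

Lemma refl_LL_sub : refl H @` LL H K `<=` LL H K.
Proof.
move=> _ [p [x xH hp] <-]; exists x => // C Cc sAC.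
apply: (hp [set z | C (refl H z)]).
  move=> a b t Ca Cb t0 t1 /=; rewrite reflD !reflZ; exact: Cc.
move=> z [Ez /(stransP _ xH) Pz]; apply: sAC; split; first exact: refl_E0.
by apply/stransP => //; rewrite P_refl.
Qed.

Lemma refl_LL : refl H @` LL H K = LL H K.
Proof.
apply/seteqP; split; first exact: refl_LL_sub.
move=> p Lp; exists (refl H p); last exact: refl_refl.
by apply: refl_LL_sub; exists p.
Qed.

Lemma enorm0 : enorm (0 : V) = 0.
Proof. by rewrite /enorm /dotv big1 ?sqrtr0 // => i _; rewrite mxE mul0r. Qed.

Lemma hdist_le (A B : set V) e : 0 <= e -> A `<=` enbhd B e -> B `<=` enbhd A e ->
  0 <= hdist A B <= e.
Proof.
move=> e0 hA hB; have Ee : [set e : R | 0 <= e /\ A `<=` enbhd B e /\ B `<=` enbhd A e] e by [].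
apply/andP; split.
  by apply: lb_le_inf; [exists e|move=> x [] ].
by apply: ge_inf => //; exists 0 => x [].
Qed.

End Final.
Unset Implicit Arguments.

Theorem corollary7 (R : realType) (n : nat) (K : set 'rV[R]_n) (H : 'M[R]_n) :
  compact K -> K !=set0 ->
  (1 <= \rank H)%N -> (\rank H <= n.-1)%N ->
  let L := \bigcup_(x in subsp H) convhull (fibsym H K `&` strans (orthc H) x) in
  [/\ compact L, refl H @` L = L &
      (fun m : nat => hdist (iter m (fibsym H) K) L) @ \oo --> (0 : R)].
Proof.
move=> cK _ _ _ L.
have -> : L = LL H K by rewrite /L /LL -(iterE H K 0).
split; [exact: (@LL_compact R n H K cK)|exact: refl_LL|].
have [B [B0 hB]] := @approx R n H K cK.
apply/cvgrPdist_le => e e0.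
pose C := B * (2 * n)%:R.
have C0 : 0 <= C by rewrite mulr_ge0.
pose N0 := Num.truncn (C / e).
apply: filterS (nbhs_infty_gt N0) => m /= hm.
have [k mk] : exists k, m = k.+1 by exists m.-1; rewrite prednK // (leq_ltn_trans _ hm).
subst m.
have kN : (N0 <= k)%N by rewrite -ltnS.
have hk : B * ((2 * n)%:R * w R k) <= e.
  rewrite mulrA -/C.
  have wk : w R k <= (k.+1%:R)^-1.
    rewrite /w lef_pV2 ?posrE ?ltr0n ?expn_gt0 // ler_nat.
    exact: ltn_expl.
  apply: (le_trans (ler_wpM2l C0 wk)).
  rewrite ler_pdivrMr ?ltr0n //.
  have ht : C / e < k.+1%:R by apply: (lt_le_trans (truncnS_gt _)); rewrite ler_nat ltnS.
  by move: ht; rewrite ltr_pdivrMr // => ht; rewrite mulrC; exact: ltW.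
have ε0 : 0 <= B * ((2 * n)%:R * w R k).
  by rewrite mulr_ge0 // mulr_ge0 // ltW // w_gt0.
have hA : iter k.+1 (fibsym H) K `<=` enbhd (LL H K) (B * ((2 * n)%:R * w R k)).
  move=> z Kz; exists z; split; first exact: KsubL Kz.
  by rewrite subrr enorm0.
have hB' : LL H K `<=` enbhd (iter k.+1 (fibsym H) K) (B * ((2 * n)%:R * w R k)).
  by move=> p Lp; have [z [Kz hz]] := hB k p Lp; exists z.
have /andP [h0 h1] := hdist_le ε0 hA hB'.
by rewrite sub0r normrN ger0_norm //; exact: le_trans h1 hk.
Qed.
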